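(* Let $I$ be an open interval of $\mathbb R$, and for each positive integer $n$ let $V_n$ be the set of all complex-valued functions $f$ on $I$ having $n$ continuous derivatives and satisfying $f^{(n)}=f$ (equivalently, $V_n$ is spanned by $e^{t},e^{\omega t},\dots,e^{\omega^{n-1}t}$ where $\omega$ is a primitive $n$-th root of unity). Let $\mathcal V=\{V_n\mid n\in\mathbb Z^{+}\}$, partially ordered by $V_k\leqslant V_n$ if and only if $k$ divides $n$ (equivalently, $V_k$ is a subspace of $V_n$). Regarding $(\mathcal V,\leqslant)$ and $\mathbb Z^{+}_D$ as categories, they are equivalent.
   Context: $\mathbb Z^{+}_D$ denotes the positive integers partially ordered by divisibility ($k\leqslant n$ iff $n=kt$ for some positive integer $t$). A partially ordered set is regarded as a category with one arrow $x\to y$ exactly when $x\leqslant y$. *)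

(* Defs.v *)
From Stdlib Require Import Reals Arith.
From Coquelicot Require Import Coquelicot.
Open Scope R_scope.

Definition in_interval (a b : Rbar) (t : R) : Prop :=
  Rbar_lt a t /\ Rbar_lt t b.

(* f : I -> C is represented by a function R -> C that vanishes outside I.
   [has_cont_derivs_fixed a b n f] : f has n continuous derivatives on I
   (fs k is f^(k) on I) and f^(n) = f on I. *)
Definition has_cont_derivs_fixed (a b : Rbar) (n : nat) (f : R -> C) : Prop :=
  exists fs : nat -> R -> C,
    fs O = f /\
    (forall k, (k < n)%nat -> forall t, in_interval a b t ->
        is_derive (K := R_AbsRing) (V := C_R_NormedModule) (fs k) t (fs (S k) t)) /\
    (forall k, (k <= n)%nat -> forall t, in_interval a b t ->
        continuous (T := R_UniformSpace) (U := C_R_NormedModule) (fs k) t) /\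
    (forall t, in_interval a b t -> fs n t = f t).

Definition Vn (a b : Rbar) (n : nat) : (R -> C) -> Prop :=
  fun f => (forall t, ~ in_interval a b t -> f t = 0%C) /\
           has_cont_derivs_fixed a b n f.

Definition calV (a b : Rbar) : Type :=
  { S : (R -> C) -> Prop | exists n : nat, (0 < n)%nat /\ S = Vn a b n }.

Definition leV (a b : Rbar) (S T : calV a b) : Prop :=
  exists k n : nat, (0 < k)%nat /\ (0 < n)%nat /\
    proj1_sig S = Vn a b k /\ proj1_sig T = Vn a b n /\ Nat.divide k n.

Definition ZposD : Type := { n : nat | (0 < n)%nat }.
Definition leD (x y : ZposD) : Prop := Nat.divide (proj1_sig x) (proj1_sig y).

Definition partial_order {A : Type} (le : A -> A -> Prop) : Prop :=
  (forall x, le x x) /\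
  (forall x y, le x y -> le y x -> x = y) /\
  (forall x y z, le x y -> le y z -> le x z).

(* Posets regarded as (thin) categories: a functor is a monotone map;
   a natural isomorphism F ~= G consists of isomorphisms F x ~= G x
   (naturality is automatic in a thin category); an equivalence of
   categories is a pair of functors F, G with G o F ~= id and F o G ~= id. *)
Definition functor {A B : Type} (leA : A -> A -> Prop) (leB : B -> B -> Prop)
  (F : A -> B) : Prop := forall x y, leA x y -> leB (F x) (F y).

Definition nat_iso {A B : Type} (leB : B -> B -> Prop) (F G : A -> B) : Prop :=
  forall x, leB (F x) (G x) /\ leB (G x) (F x).

Definition cat_equivalent {A B : Type} (leA : A -> A -> Prop)
  (leB : B -> B -> Prop) : Prop :=
  exists (F : A -> B) (G : B -> A),
    functor leA leB F /\ functor leB leA G /\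
    nat_iso leA (fun x => G (F x)) (fun x => x) /\
    nat_iso leB (fun y => F (G y)) (fun y => y).

(* Main.v *)
Require Import Defs.
From Stdlib Require Import Reals Arith Lia Lra ZArith.
From Stdlib Require Import ClassicalDescription ProofIrrelevance IndefiniteDescription.
From Coquelicot Require Import Coquelicot.
Open Scope R_scope.

Lemma der_fst (F : R -> C) t (l : C) :
  is_derive (K := R_AbsRing) (V := C_R_NormedModule) F t l ->
  is_derive (fun u => fst (F u)) t (fst l).
Proof.
  intros H. unfold is_derive in *.
  apply (filterdiff_comp' F (fun p : C_R_NormedModule => fst p) t _ (fun p : C_R_NormedModule => fst p) H).
  apply filterdiff_linear. apply (is_linear_fst (U := R_NormedModule) (V := R_NormedModule)).
Qed.

Lemma der_snd (F : R -> C) t (l : C) :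
  is_derive (K := R_AbsRing) (V := C_R_NormedModule) F t l ->
  is_derive (fun u => snd (F u)) t (snd l).
Proof.
  intros H. unfold is_derive in *.
  apply (filterdiff_comp' F (fun p : C_R_NormedModule => snd p) t _ (fun p : C_R_NormedModule => snd p) H).
  apply filterdiff_linear. apply (is_linear_snd (U := R_NormedModule) (V := R_NormedModule)).
Qed.

Lemma der_pair (f g : R -> R) t l1 l2 :
  is_derive f t l1 -> is_derive g t l2 ->
  is_derive (K := R_AbsRing) (V := C_R_NormedModule) (fun u => (f u, g u) : C) t (l1, l2).
Proof.
  intros H1 H2. unfold is_derive in *.
  apply (filterdiff_comp_2 (K := R_AbsRing) (T := R_NormedModule) (U := R_NormedModule)
     (V := R_NormedModule) (W := C_R_NormedModule) f g (fun x y => (x, y) : C)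
     _ _ (fun x y => (x, y) : C) H1 H2).
  apply (filterdiff_linear (U := prod_NormedModule _ R_NormedModule R_NormedModule)
     (V := C_R_NormedModule) (fun t0 : R * R => (fst t0, snd t0) : C)).
  split.
  - intros [] []; reflexivity.
  - intros k []; reflexivity.
  - exists 1. split; [lra|]. intros [x y]. rewrite Rmult_1_l. apply Rle_refl.
Qed.

Lemma der_unique (F : R -> C) t (l l' : C) :
  is_derive (K := R_AbsRing) (V := C_R_NormedModule) F t l ->
  is_derive (K := R_AbsRing) (V := C_R_NormedModule) F t l' -> l = l'.
Proof.
  intros H H'. destruct l as [l1 l2], l' as [m1 m2].
  apply der_fst in H as H1. apply der_fst in H' as H1'.
  apply der_snd in H as H2. apply der_snd in H' as H2'.
  apply is_derive_unique in H1, H1', H2, H2'. simpl in *. congruence.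
Qed.
Definition E (w : C) (t : R) : C :=
  (exp (fst w * t) * cos (snd w * t), exp (fst w * t) * sin (snd w * t)).

Lemma der_E w t : is_derive (K := R_AbsRing) (V := C_R_NormedModule) (E w) t (Cmult w (E w t)).
Proof.
  destruct w as [c s]. unfold E, Cmult; simpl.
  apply der_pair.
  - auto_derive; [auto | ring].
  - auto_derive; [auto | ring].
Qed.

Lemma der_cmul (F : R -> C) t (l c : C) :
  is_derive (K := R_AbsRing) (V := C_R_NormedModule) F t l ->
  is_derive (K := R_AbsRing) (V := C_R_NormedModule) (fun u => Cmult c (F u)) t (Cmult c l).
Proof.
  intros H. apply der_fst in H as H1. apply der_snd in H as H2.
  destruct c as [c1 c2]. destruct l as [l1 l2]. simpl in *.
  unfold Cmult at 2; simpl.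
  apply (is_derive_ext (fun u => (c1 * fst (F u) - c2 * snd (F u), c1 * snd (F u) + c2 * fst (F u)) : C)).
  { intros u. unfold Cmult. destruct (F u); reflexivity. }
  apply der_pair.
  - apply (is_derive_minus (fun u => c1 * fst (F u)) (fun u => c2 * snd (F u))); apply is_derive_scal; assumption.
  - apply (is_derive_plus (fun u => c1 * snd (F u)) (fun u => c2 * fst (F u))); apply is_derive_scal; assumption.
Qed.

Lemma succ_mod k m : k <> O ->
  ((S (m mod k) < k)%nat /\ (S m) mod k = S (m mod k)) \/ (S (m mod k) = k /\ (S m) mod k = O).
Proof.
  intros Hk. pose proof (Nat.div_mod m k Hk) as Hd. pose proof (Nat.mod_upper_bound m k Hk).
  destruct (Nat.eq_dec (S (m mod k)) k) as [E|E].
  - right. split; auto. symmetry. apply (Nat.mod_unique _ _ (S (m / k))); lia.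
  - left. split; [lia|]. symmetry. apply (Nat.mod_unique _ _ (m / k)); lia.
Qed.

Lemma Vn_incl a b k n f : (0 < k)%nat -> Nat.divide k n -> Vn a b k f -> Vn a b n f.
Proof.
  intros Hk Hd [Hz [fs [H0 [Hd' [Hc Hn]]]]]. split; [exact Hz|].
  assert (Hk' : k <> O) by lia.
  exists (fun m => fs (m mod k)). split; [|split; [|split]].
  - simpl. rewrite Nat.Div0.mod_0_l. exact H0.
  - intros m _ t Ht. destruct (succ_mod k m Hk') as [[A B]|[A B]]; rewrite B.
    + apply Hd'; auto. pose proof (Nat.mod_upper_bound m k Hk'); lia.
    + assert (Hr: (m mod k < k)%nat) by (apply Nat.mod_upper_bound; auto).
      pose proof (Hd' _ Hr t Ht) as D. rewrite A in D. rewrite Hn in D by exact Ht. rewrite H0. exact D.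
  - intros m _ t Ht. apply Hc; auto. pose proof (Nat.mod_upper_bound m k Hk'); lia.
  - intros t Ht. destruct Hd as [q ->]. rewrite Nat.Div0.mod_mul. rewrite H0. reflexivity.
Qed.

Definition W (a b : Rbar) (w : C) (t : R) : C :=
  if excluded_middle_informative (in_interval a b t) then E w t else 0%C.

Lemma interval_loc a b t : in_interval a b t -> locally t (in_interval a b).
Proof.
  intros [H1 H2].
  pose proof (open_Rbar_gt a t H1) as L1. pose proof (open_Rbar_lt b t H2) as L2.
  apply (filter_and _ _ L1 L2).
Qed.

Lemma W_loc a b w t : in_interval a b t -> locally t (fun u => E w u = W a b w u).
Proof.
  intros Ht. apply (filter_imp (in_interval a b)); [|apply interval_loc; auto].
  intros u Hu. unfold W. destruct (excluded_middle_informative _); tauto.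
Qed.

Lemma der_pE w j t : is_derive (K := R_AbsRing) (V := C_R_NormedModule)
  (fun u => Cmult (Cpow w j) (E w u)) t (Cmult (Cpow w (S j)) (E w t)).
Proof.
  replace (Cmult (Cpow w (S j)) (E w t)) with (Cmult (Cpow w j) (Cmult w (E w t))).
  - apply der_cmul, der_E.
  - simpl. rewrite Cmult_assoc. rewrite (Cmult_comm (Cpow w j) w). reflexivity.
Qed.

Lemma W_in a b w k : Cpow w k = 1%C -> Vn a b k (W a b w).
Proof.
  intros Hk. split.
  { intros t Ht. unfold W. destruct (excluded_middle_informative _); tauto. }
  exists (fun j => match j with O => W a b w | S _ => fun t => Cmult (Cpow w j) (E w t) end).
  split; [reflexivity|split; [|split]].
  - intros [|j] _ t Ht.
    + apply (is_derive_ext_loc (E w)). apply W_loc; auto.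
      simpl. rewrite Cmult_1_r. apply der_E.
    + apply der_pE.
  - intros [|j] _ t Ht.
    + apply (continuous_ext_loc (T:=R_UniformSpace) (U:=C_R_NormedModule) (W a b w) (E w)).
      * apply W_loc; auto.
      * apply (ex_derive_continuous (K:=R_AbsRing) (V:=C_R_NormedModule)). eexists. apply der_E.
    + apply (ex_derive_continuous (K:=R_AbsRing) (V:=C_R_NormedModule)). eexists. apply der_pE.
  - intros t Ht. destruct k as [|k]; [reflexivity|].
    rewrite Hk, Cmult_1_l. unfold W. destruct (excluded_middle_informative _); tauto.
Qed.

Lemma E_nz w t : E w t <> 0%C.
Proof.
  unfold E. intros H. injection H as H1 H2.
  pose proof (exp_pos (fst w * t)).
  apply Rmult_integral in H1. apply Rmult_integral in H2.
  pose proof (sin2_cos2 (snd w * t)) as S. unfold Rsqr in S.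
  destruct H1 as [H1|H1]; [lra|]. destruct H2 as [H2|H2]; [lra|].
  rewrite H1, H2 in S. lra.
Qed.

Lemma W_dvd a b w n t0 : in_interval a b t0 -> Vn a b n (W a b w) -> Cpow w n = 1%C.
Proof.
  intros Ht0 [_ [fs [H0 [Hd [_ Hn]]]]].
  assert (Cl : forall j, (j <= n)%nat -> forall t, in_interval a b t ->
     fs j t = Cmult (Cpow w j) (E w t)).
  { induction j as [|j IH]; intros Hj t Ht.
    - rewrite H0. simpl. rewrite Cmult_1_l. unfold W.
      destruct (excluded_middle_informative _); tauto.
    - apply (der_unique (fs j) t).
      + apply Hd; [lia|exact Ht].
      + apply (is_derive_ext_loc (fun u => Cmult (Cpow w j) (E w u))).
        * apply (filter_imp (in_interval a b)); [|apply interval_loc; auto].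
          intros u Hu. symmetry. apply IH; [lia|auto].
        * apply der_pE. }
  pose proof (Cl n (le_n n) t0 Ht0) as Hc. rewrite Hn in Hc by auto.
  unfold W in Hc. destruct (excluded_middle_informative _) as [_|C]; [|tauto].
  pose proof (E_nz w t0) as Nz.
  assert (Cmult (Cmult (Cpow w n) (E w t0)) (Cinv (E w t0)) = Cmult (E w t0) (Cinv (E w t0))) as X
    by (rewrite <- Hc; reflexivity).
  rewrite <- Cmult_assoc, Cinv_r in X by exact Nz. rewrite Cmult_1_r in X. exact X.
Qed.

Definition wk (k : nat) : C := (cos (2 * PI / INR k), sin (2 * PI / INR k)).

Lemma Cpow_cs th n : Cpow (cos th, sin th) n = (cos (INR n * th), sin (INR n * th)).
Proof.
  induction n as [|n IH].
  - simpl. rewrite Rmult_0_l, cos_0, sin_0. reflexivity.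
  - simpl Cpow. rewrite IH. rewrite S_INR.
    replace ((INR n + 1) * th) with (th + INR n * th) by ring.
    rewrite cos_plus, sin_plus. unfold Cmult; simpl. f_equal; ring.
Qed.

Lemma wk_pow k : (0 < k)%nat -> Cpow (wk k) k = 1%C.
Proof.
  intros Hk. unfold wk. rewrite Cpow_cs.
  assert (INR k <> 0) by (apply not_0_INR; lia).
  replace (INR k * (2 * PI / INR k)) with (2 * PI) by (field; auto).
  rewrite cos_2PI, sin_2PI. reflexivity.
Qed.

Lemma wk_dvd k n : (0 < k)%nat -> Cpow (wk k) n = 1%C -> Nat.divide k n.
Proof.
  intros Hk H. unfold wk in H. rewrite Cpow_cs in H. injection H as H1 _.
  assert (Kp : 0 < INR k) by (apply lt_0_INR; lia).
  replace (INR n * (2 * PI / INR k)) with (2 * (PI * INR n / INR k)) in H1 by (field; lra).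
  rewrite cos_2a_sin in H1.
  assert (S0 : sin (PI * INR n / INR k) = 0).
  { assert (sin (PI * INR n / INR k) * sin (PI * INR n / INR k) = 0) by lra.
    apply Rmult_integral in H. tauto. }
  apply sin_eq_0_0 in S0. destruct S0 as [m Hm].
  pose proof PI_RGT_0.
  assert (INR n = IZR m * INR k) as Hn.
  { apply (Rmult_eq_reg_l (PI / INR k)); [|apply Rgt_not_eq; apply Rdiv_lt_0_compat; lra].
    replace (PI / INR k * INR n) with (PI * INR n / INR k) by (field; lra).
    rewrite Hm. field; lra. }
  rewrite !INR_IZR_INZ, <- mult_IZR in Hn. apply eq_IZR in Hn.
  exists (Z.to_nat m). apply Nat2Z.inj. rewrite Nat2Z.inj_mul, Z2Nat.id; [lia|nia].
Qed.

Lemma exists_pt (a b : Rbar) : Rbar_lt a b -> exists t, in_interval a b t.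
Proof.
  unfold in_interval. destruct a as [a| |], b as [b| |]; simpl; intros H; try contradiction.
  - exists ((a + b) / 2). simpl. lra.
  - exists (a + 1). simpl. lra.
  - exists (b - 1). simpl. lra.
  - exists 0. simpl. auto.
Qed.

Lemma Vn_dvd a b k n : Rbar_lt a b -> (0 < k)%nat ->
  (forall f, Vn a b k f -> Vn a b n f) -> Nat.divide k n.
Proof.
  intros Hab Hk H. destruct (exists_pt a b Hab) as [t0 Ht0].
  apply wk_dvd; auto. apply (W_dvd a b (wk k) n t0 Ht0). apply H. apply W_in. apply wk_pow; auto.
Qed.

Lemma Vn_inj a b k n : Rbar_lt a b -> (0 < k)%nat -> (0 < n)%nat -> Vn a b k = Vn a b n -> k = n.
Proof.
  intros Hab Hk Hn E. apply Nat.divide_antisym.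
  - apply (Vn_dvd a b); auto. rewrite E; auto.
  - apply (Vn_dvd a b); auto. rewrite E; auto.
Qed.

Definition idx a b (x : calV a b) : {n : nat | (0 < n)%nat /\ proj1_sig x = Vn a b n} :=
  constructive_indefinite_description _ (proj2_sig x).

Definition Fm a b (x : calV a b) : ZposD :=
  exist _ (proj1_sig (idx a b x)) (proj1 (proj2_sig (idx a b x))).

Definition Gm a b (y : ZposD) : calV a b :=
  exist _ (Vn a b (proj1_sig y)) (ex_intro _ (proj1_sig y) (conj (proj2_sig y) eq_refl)).

Theorem mainTheorem5 (a b : Rbar) (hab : Rbar_lt a b) :
  partial_order (leV a b) /\ cat_equivalent (leV a b) leD.
Proof.
  split; [split; [|split]|].
  - intros [X [n [Hn EX]]]. exists n, n. simpl. repeat split; auto. apply Nat.divide_refl.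
  - intros [X px] [Y py] [k [n [Hk [Hn [E1 [E2 D1]]]]]] [n' [k' [Hn' [Hk' [E3 [E4 D2]]]]]].
    simpl in *.
    assert (k' = k) by (apply (Vn_inj a b); auto; congruence).
    assert (n' = n) by (apply (Vn_inj a b); auto; congruence).
    subst k' n'. assert (k = n) by (apply Nat.divide_antisym; auto). subst k.
    subst. f_equal. apply proof_irrelevance.
  - intros x y z [k [n [Hk [Hn [E1 [E2 D1]]]]]] [n' [m [Hn' [Hm [E3 [E4 D2]]]]]].
    assert (n' = n) by (apply (Vn_inj a b); auto; congruence). subst.
    exists k, m. repeat split; auto. apply (Nat.divide_trans _ n); auto.
  - exists (Fm a b), (Gm a b). split; [|split; [|split]].
    + intros x y [k [n [Hk [Hn [E1 [E2 D1]]]]]]. unfold leD, Fm; simpl.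
      destruct (idx a b x) as [k' [Hk' E1']]. destruct (idx a b y) as [n' [Hn' E2']]. simpl.
      assert (k' = k) by (apply (Vn_inj a b); auto; congruence).
      assert (n' = n) by (apply (Vn_inj a b); auto; congruence). subst. exact D1.
    + intros [k Hk] [n Hn] D. unfold leD in D; simpl in D. exists k, n. simpl. repeat split; auto.
    + intros x. unfold Gm, Fm; simpl. destruct (idx a b x) as [k [Hk E1]]. simpl.
      split; exists k, k; simpl; repeat split; auto; apply Nat.divide_refl.
    + intros [n Hn]. unfold Gm, Fm, leD; simpl.
      destruct (idx a b _) as [k [Hk E1]]. simpl in *.
      assert (k = n) by (apply (Vn_inj a b); auto). subst. split; apply Nat.divide_refl.
Qed.
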